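(* Let $G$ be a graph all of whose $\operatorname{IR}(G)$-sets are independent. If the $\operatorname{IR}$-graph $H=G(\operatorname{IR})$ is connected and has at least three vertices, then $H$ contains a triangle or an induced $C_4$.
   Context: All graphs are finite and simple. For $G=(V,E)$, $D\subseteq V$, $v\in D$: $\operatorname{PN}(v,D)=N[v]-N[D-\{v\}]$ (closed neighbourhoods). $D$ is irredundant if $\operatorname{PN}(v,D)\neq\varnothing$ for all $v\in D$; $\operatorname{IR}(G)$ is the maximum size of an irredundant set; an $\operatorname{IR}(G)$-set is an irredundant set of that size. $G(\operatorname{IR})$ has the $\operatorname{IR}(G)$-sets as vertices, with $D\sim D'$ iff there exist $u\in D$, $v\in D'$ with $uv\in E(G)$ and $D'=(D-\{u\})\cup\{v\}$. *)

(* Defs.v *)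
(* A finite simple graph is a symmetric irreflexive relation
   e on a finite type T. *)
From mathcomp Require Import all_boot.
Set Implicit Arguments. Unset Strict Implicit. Unset Printing Implicit Defensive.

Section IRGraph.
Variables (T : finType) (e : rel T).

Definition cnbhd (v : T) : {set T} := v |: [set w | e v w].
Definition cnbhdS (S : {set T}) : {set T} := \bigcup_(v in S) cnbhd v.
Definition pn (v : T) (D : {set T}) : {set T} := cnbhd v :\: cnbhdS (D :\ v).

Definition irredundant (D : {set T}) : bool := [forall v in D, pn v D != set0].

(* IR(G): maximum size of an irredundant set (set0 is irredundant) *)
Definition IRnum : nat := \max_(D : {set T} | irredundant D) #|D|.

Definition IRset (D : {set T}) : bool := irredundant D && (#|D| == IRnum).

Definition independent (D : {set T}) : bool :=
  [forall u in D, forall v in D, ~~ e u v].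

Definition IRadj (D D' : {set T}) : bool :=
  [&& IRset D, IRset D' &
   [exists u in D, exists v in D', e u v && (D' == (D :\ u) :|: [set v])]].

Definition IRgraph_connected : Prop :=
  forall D D', IRset D -> IRset D' -> connect IRadj D D'.

Definition IRgraph_order : nat := #|[set D : {set T} | IRset D]|.

Definition IRgraph_has_triangle : Prop :=
  exists D1 D2 D3 : {set T},
    [/\ D1 != D2, D2 != D3, D1 != D3 &
        [/\ IRadj D1 D2, IRadj D2 D3 & IRadj D1 D3]].

Definition IRgraph_has_induced_C4 : Prop :=
  exists D1 D2 D3 D4 : {set T},
    [/\ uniq [:: D1; D2; D3; D4],
        [/\ IRadj D1 D2, IRadj D2 D3, IRadj D3 D4 & IRadj D4 D1] &
        ~~ IRadj D1 D3 /\ ~~ IRadj D2 D4].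

End IRGraph.

(* Main.v *)
Require Import Defs.
From mathcomp Require Import all_boot.
Set Implicit Arguments. Unset Strict Implicit.

Lemma indepP (T : finType) (e : rel T) (D : {set T}) :
  reflect (forall a b, a \in D -> b \in D -> ~~ e a b) (independent e D).
Proof.
apply: (iffP idP) => [H a b Ha Hb | H].
- move/forallP: H => /(_ a); rewrite Ha /= => /forallP /(_ b); by rewrite Hb.
- apply/forallP => a; apply/implyP => Ha; apply/forallP => b; apply/implyP => Hb; exact: H.
Qed.

Lemma notin_cnbhdS (T : finType) (e : rel T) (S : {set T}) a :
  (forall y, y \in S -> (a != y) && ~~ e y a) -> a \notin cnbhdS e S.
Proof.
move=> H; apply/bigcupP => -[y Hy]; rewrite /cnbhd !inE => /orP[/eqP ay|eya];
  move: (H y Hy); by rewrite ?ay ?eqxx ?eya //= andbF.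
Qed.

Lemma pn_wit (T : finType) (e : rel T) z (D : {set T}) a :
  (a == z) || e z a -> (forall y, y \in D -> y != z -> (a != y) && ~~ e y a) ->
  pn e z D != set0.
Proof.
move=> Ha H; apply/set0Pn; exists a; rewrite /pn in_setD; apply/andP; split;
  last by rewrite /cnbhd !inE.
apply: notin_cnbhdS => y; rewrite in_setD1 => /andP[yz yD]; exact: H.
Qed.

Lemma indep_irr (T : finType) (e : rel T) (D : {set T}) :
  irreflexive e -> independent e D -> irredundant e D.
Proof.
move=> irr /indepP H; apply/forallP => v; apply/implyP => Hv.
apply: (pn_wit (a:=v)); first by rewrite eqxx.
move=> y Hy yv; rewrite eq_sym yv /=; exact: H.
Qed.

Lemma irr_le (T : finType) (e : rel T) (D : {set T}) :
  irredundant e D -> #|D| <= IRnum e.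
Proof. move=> H; rewrite /IRnum; exact: (@leq_bigmax_cond _ (irredundant e) (fun D : {set T} => #|D|) D H). Qed.

Lemma card_swap (T : finType) (D : {set T}) a b :
  a \in D -> b \notin D :\ a -> #|D :\ a :|: [set b]| = #|D|.
Proof. move=> Ha Hb; by rewrite setUC cardsU1 Hb (cardsD1 a D) Ha. Qed.

Lemma swap_notin (T : finType) (D : {set T}) a b :
  a \in D -> #|D :\ a :|: [set b]| = #|D| -> b \notin D :\ a.
Proof.
move=> Ha; rewrite setUC cardsU1 (cardsD1 a D) Ha.
by case: (b \in _) => //= /eqP; rewrite eqn_add2r.
Qed.

Lemma IRadjP (T : finType) (e : rel T) D D' : IRadj e D D' ->
  [/\ IRset e D, IRset e D' & exists u v,
     [/\ u \in D, v \in D', e u v & D' = D :\ u :|: [set v]]].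
Proof.
case/and3P => H1 H2 /existsP[u /andP[Hu /existsP[v /andP[Hv /andP[Huv /eqP E]]]]].
split => //; by exists u, v.
Qed.

Lemma mkIRadj (T : finType) (e : rel T) D D' u v :
  IRset e D -> IRset e D' -> u \in D -> v \in D' -> e u v ->
  D' = D :\ u :|: [set v] -> IRadj e D D'.
Proof.
move=> H1 H2 Hu Hv Huv E; rewrite /IRadj H1 H2 /=; apply/existsP; exists u.
rewrite Hu; apply/existsP; exists v; by rewrite Hv Huv -E eqxx.
Qed.

Lemma notadj (T : finType) (e : rel T) D D' a1 a2 :
  IRadj e D D' -> a1 \in D -> a1 \notin D' -> a2 \in D -> a2 \notin D' -> a1 = a2.
Proof.
case/IRadjP => _ _ [u [v [_ _ _ E]]] H1 N1 H2 N2.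
have h : forall a, a \in D -> a \notin D' -> a = u.
  move=> a Ha Na; apply/eqP/negPn/negP => ne; move: Na; by rewrite E !inE ne Ha.
by rewrite (h _ H1 N1) (h _ H2 N2).
Qed.

Lemma main (T : finType) (e : rel T)
  (e_sym : symmetric e) (e_irr : irreflexive e)
  (Hind : forall D : {set T}, IRset e D -> independent e D) D1 D2 D3 :
  IRadj e D1 D2 -> IRadj e D2 D3 -> D1 != D3 ->
  IRgraph_has_triangle e \/ IRgraph_has_induced_C4 e.
Proof.
move=> A12 A23 n13.
have [I1 I2 [u [v [uD1 vD2 euv E2]]]] := IRadjP A12.
have [_ I3 [w [x [wD2 xD3 ewx E3]]]] := IRadjP A23.
have /indepP ind1 := Hind _ I1.
have /indepP ind2 := Hind _ I2.
have /indepP ind3 := Hind _ I3.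
have cardE : forall D, IRset e D -> #|D| = IRnum e by move=> D /andP[_ /eqP].
have uv : u != v by apply: contraTneq euv => ->; rewrite e_irr.
have wx : w != x by apply: contraTneq ewx => ->; rewrite e_irr.
have vD1 : v \notin D1.
  have := swap_notin uD1 (b := v); rewrite -E2 !cardE // => /(_ erefl).
  by apply: contra => H; rewrite !inE H andbT eq_sym uv.
have xD2 : x \notin D2.
  have := swap_notin wD2 (b := x); rewrite -E3 !cardE // => /(_ erefl).
  by apply: contra => H; rewrite !inE H andbT eq_sym wx.
have mD2 : forall z, (z \in D2) = ((z != u) && (z \in D1)) || (z == v).
  by move=> z; rewrite E2 !inE.
have mD3 : forall z, (z \in D3) = ((z != w) && (z \in D2)) || (z == x).
  by move=> z; rewrite E3 !inE.
have vx : v != x by apply: contraNneq xD2 => <-.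
have uD2 : u \notin D2 by rewrite mD2 eqxx /= (negbTE uv).
have [ewv|nwv] := eqVneq w v.
- subst w.
  have xD1 : x \notin D1.
    apply/negP => xD1; move/negP: xD2; apply; rewrite mD2 xD1 andbT.
    apply/orP; left; apply/eqP => xu; move/eqP: n13; apply.
    apply/setP => z; rewrite mD3 mD2 xu.
    have [->|zv] := eqVneq z v; first by rewrite (negbTE vD1) eq_sym (negbTE uv).
    have [->|zu] := eqVneq z u; first by rewrite uD1 orbT.
    by case: (z \in D1).
  have eux : e u x.
    apply/negPn/negP => neux.
    have : independent e (x |: D1).
      apply/indepP => a b; rewrite !inE => /orP[/eqP->|Ha] /orP[/eqP->|Hb].
      + by rewrite e_irr.
      + have [->|bu] := eqVneq b u; first by rewrite e_sym.
        apply: ind3 => //; rewrite mD3 mD2 bu Hb /=.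
        by rewrite andbT; apply/orP; left; apply: contraNneq vD1 => <-.
      + have [->|au] := eqVneq a u; first by [].
        apply: ind3 => //; rewrite mD3 mD2 au Ha /=.
        by rewrite andbT; apply/orP; left; apply: contraNneq vD1 => <-.
      + exact: ind1.
    move=> /(indep_irr e_irr) /irr_le; rewrite cardsU1 xD1 cardE //.
    by rewrite add1n ltnn.
  left; exists D1, D2, D3; split => //; last split => //.
  + by apply/eqP => E; move: uD1; rewrite E (negbTE uD2).
  + by apply/eqP => E; move: vD2; rewrite E mD3 eqxx (negbTE vx).
  + apply: mkIRadj I1 I3 uD1 xD3 eux _.
    apply/setP => z; rewrite mD3 mD2 !inE.
    have [->|zv] := eqVneq z v; first by rewrite (negbTE vD1) andbF.
    by case: (z \in D1); case: (z == u); case: (z == x).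
- move: (wD2); rewrite mD2 (negbTE nwv) orbF => /andP[wu wD1].
  have vD3 : v \in D3 by rewrite mD3 vD2 andbT eq_sym nwv.
  have xu : x != u.
    apply: contraTneq euv => xu; rewrite -xu; exact: ind3.
  have xD1 : x \notin D1 by apply: contra xD2 => H; rewrite mD2 H xu.
  set D4 := D1 :\ w :|: [set x].
  have mD4 z : (z \in D4) = ((z != w) && (z \in D1)) || (z == x) by rewrite !inE.
  have zD3 z : z \in D1 -> z != u -> z != w -> z \in D3.
    by move=> H1 H2 H3; rewrite mD3 mD2 H1 H2 H3.
  have I4 : IRset e D4.
    apply/andP; split; last first.
      rewrite /D4 card_swap //; first by rewrite cardE.
      by rewrite inE (negbTE xD1) andbF.
    apply/forallP => z; apply/implyP; rewrite mD4 => /orP[/andP[zw zD1]|/eqP->].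
    + have [->|zu] := eqVneq z u.
      * apply: (pn_wit (a:=v)); first by rewrite euv orbT.
        move=> y; rewrite mD4 => /orP[/andP[yw yD1]|/eqP->] yu.
        - apply/andP; split; first by apply: contraNneq vD1 => ->.
          by apply: ind2 => //; rewrite mD2 yu yD1.
        - by apply/andP; split; [exact: vx | apply: ind3].
      * apply: (pn_wit (a:=z)); first by rewrite eqxx.
        move=> y; rewrite mD4 => /orP[/andP[yw yD1]|/eqP->] yz.
        - by rewrite eq_sym yz /=; apply: ind1.
        - apply/andP; split; first by apply: contraNneq xD1 => <-.
          by apply: ind3 => //; apply: zD3.
    + apply: (pn_wit (a:=w)); first by rewrite e_sym ewx orbT.
      move=> y; rewrite mD4 => /orP[/andP[yw yD1]|/eqP->] yx; last by rewrite eqxx in yx.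
      by rewrite eq_sym yw /=; apply: ind1.
  have /indepP ind4 := Hind _ I4.
  have uD4 : u \in D4 by rewrite mD4 uD1 eq_sym wu.
  have xD4 : x \in D4 by rewrite mD4 eqxx orbT.
  have neux : ~~ e u x := ind4 u x uD4 xD4.
  have wD4 : w \notin D4 by rewrite mD4 eqxx /= (negbTE wx).
  have wD3 : w \notin D3 by rewrite mD3 eqxx /= (negbTE wx).
  have vD4 : v \notin D4 by rewrite mD4 (negbTE vD1) andbF (negbTE vx).
  have uD3 : u \notin D3 by rewrite mD3 (negbTE uD2) andbF eq_sym (negbTE xu).
  have n12 : D1 != D2 by apply/eqP => E; move: uD1; rewrite E (negbTE uD2).
  have n14 : D1 != D4 by apply/eqP => E; move: wD1; rewrite E (negbTE wD4).
  have n23 : D2 != D3 by apply/eqP => E; move: wD2; rewrite E (negbTE wD3).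
  have n24 : D2 != D4 by apply/eqP => E; move: vD2; rewrite E (negbTE vD4).
  have n34 : D3 != D4 by apply/eqP => E; move: vD3; rewrite E (negbTE vD4).
  right; exists D1, D2, D3, D4; split.
  + by rewrite /= !inE !negb_or n12 n13 n14 n23 n24 n34.
  + split => //.
    * apply: mkIRadj I3 I4 vD3 uD4 _ _; first by rewrite e_sym.
      apply/setP => z; rewrite mD4 !inE mD3 mD2.
      have [->|zu] := eqVneq z u; first by rewrite eq_sym wu uD1 ?eqxx ?orbT.
      have [->|zv] := eqVneq z v.
        by rewrite (negbTE vD1) andbF (negbTE vx).
      have [->|zx] := eqVneq z x; first by rewrite ?orbT ?andbT.
      rewrite /=.
      by case: (z == w); case: (z \in D1).
    * apply: (mkIRadj I4 I1 xD4 wD1); first by rewrite e_sym.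
      apply/setP => z; rewrite !inE.
      have [->|zx] := eqVneq z x.
        by rewrite (negbTE xD1) (eq_sym x w) (negbTE wx) /= ?andbF.
      have [zw|zw] := eqVneq z w; first by rewrite zw wD1 ?orbT.
      rewrite /=.
      by case: (z \in D1).
  + split; apply/negP => H.
    * by move/eqP: wu; apply; apply: (notadj H).
    * by move/eqP: nwv; apply; apply: (notadj H).
Qed.

Theorem lemma4p5 (T : finType) (e : rel T)
  (e_sym : symmetric e) (e_irr : irreflexive e)
  (Hind : forall D : {set T}, IRset e D -> independent e D)
  (Hconn : IRgraph_connected e)
  (H3 : 3 <= IRgraph_order e) :
  IRgraph_has_triangle e \/ IRgraph_has_induced_C4 e.
Proof.
have key : forall X Y, IRset e X -> IRset e Y -> X != Y -> ~~ IRadj e X Y ->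
    IRgraph_has_triangle e \/ IRgraph_has_induced_C4 e.
  move=> X Y HX HY nXY nadj; move: (Hconn X Y HX HY) => /connectP [p pth lst].
  move: lst; case/shortenP: pth => q qpth quniq _ lst.
  case: q qpth quniq lst => [|D2 [|D3 q]] /=.
  - by move=> _ _ YX; rewrite YX eqxx in nXY.
  - by move=> /andP[a _] _ YD; rewrite YD a in nadj.
  - move=> /and3P[a12 a23 _] /andP[nin _] _.
    apply: (main e_sym e_irr Hind a12 a23).
    by apply: contra nin => /eqP ->; rewrite !inE eqxx orbT.
move: H3; rewrite /IRgraph_order => /card_gt2P [A [B [C [[HA HB HC] [nAB nBC nCA]]]]].
rewrite !inE in HA HB HC.
case aAB: (IRadj e A B); last by apply: (key A B) => //; rewrite aAB.
case aBC: (IRadj e B C); last by apply: (key B C) => //; rewrite aBC.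
case aAC: (IRadj e A C); last by apply: (key A C) => //; [rewrite eq_sym | rewrite aAC].
by left; exists A, B, C; split => //; rewrite eq_sym.
Qed.
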